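(* Let $p_1,\dots,p_4\in\mathbb R^2$ be in general position. For $i\ne j$, define $$w_{ij}=\frac{1}{\det(p_i,p_j,p_k)\det(p_i,p_j,p_l)},$$ where $\{k,l\}=\{1,2,3,4\}\setminus\{i,j\}$, and define $\alpha_i=\sum_{j\ne i}w_{ij}|p_i-p_j|$. Then the $w_{ij}$ and $\alpha_i$ form a stress of the complete marked graph on the four points, with the following signs: - $w_{ij}>0$ if $p_ip_j$ is an edge of the boundary of $\operatorname{conv}\{p_1,\dots,p_4\}$, and $w_{ij}<0$ otherwise; - $\alpha_i>0$ if $p_i$ is a vertex of $\operatorname{conv}\{p_1,\dots,p_4\}$, and $\alpha_i<0$ if $p_i$ lies in its interior.
   Context: For $x,y,z\in\mathbb R^2$, $\det(x,y,z)$ is the determinant of the $3\times3$ matrix with columns $(x,1),(y,1),(z,1)$, i.e. twice the signed area of the triangle $xyz$. General position means no three of the points are collinear. A stress on a marked graph with edge set $E$ and marked vertex set $V$ is an assignment of scalars $w_{ij}$ ($ij\in E$) and $\alpha_i$ ($i\in V$) such that, for all $(v,t)\in(\mathbb R^2)^4\times\mathbb R^4$, $$\sum_{ij\in E}w_{ij}\big(\langle p_i-p_j,v_i-v_j\rangle-|p_i-p_j|(t_i+t_j)\big)+\sum_{i\in V}\alpha_it_i=0.$$ *)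

(* Defs.v *)
From mathcomp Require Import all_boot all_order all_algebra.
From mathcomp Require Import reals.
Set Implicit Arguments. Unset Strict Implicit. Unset Printing Implicit Defensive.
Import Order.TTheory GRing.Theory Num.Theory.
Local Open Scope ring_scope.

Definition pt (R : realType) := (R * R)%type.

Section Defs.
Variable R : realType.

(* det(x,y,z): determinant of the 3x3 matrix with columns (x,1),(y,1),(z,1). *)
Definition det3 (x y z : pt R) : R :=
  \det (\matrix_(a < 3, b < 3)
          (let q := nth x [:: x; y; z] b in
           nth 1 [:: q.1; q.2; 1] a)).

Definition dot (x y : pt R) : R := x.1 * y.1 + x.2 * y.2.
Definition psub (x y : pt R) : pt R := (x.1 - y.1, x.2 - y.2).
Definition enorm (x : pt R) : R := Num.sqrt (dot x x).
Definition dist (x y : pt R) : R := enorm (psub x y).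

Definition general_position n (p : 'I_n -> pt R) : Prop :=
  forall i j k : 'I_n, i != j -> j != k -> i != k -> det3 (p i) (p j) (p k) != 0.

(* Stress on a marked graph with edge set E (each edge listed once, as an
   ordered pair) and marked vertex set V. *)
Definition is_stress n (p : 'I_n -> pt R) (E : {set 'I_n * 'I_n})
    (V : {set 'I_n}) (w : 'I_n -> 'I_n -> R) (alpha : 'I_n -> R) : Prop :=
  forall (v : 'I_n -> pt R) (t : 'I_n -> R),
    \sum_(e in E) w e.1 e.2 *
        (dot (psub (p e.1) (p e.2)) (psub (v e.1) (v e.2))
         - enorm (psub (p e.1) (p e.2)) * (t e.1 + t e.2))
    + \sum_(i in V) alpha i * t i = 0.

Definition complete_edges n : {set 'I_n * 'I_n} := [set e : 'I_n * 'I_n | (e.1 < e.2)%N].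

Definition conv n (p : 'I_n -> pt R) (x : pt R) : Prop :=
  exists lam : 'I_n -> R, (forall k, 0 <= lam k) /\ \sum_k lam k = 1 /\
    x = (\sum_k lam k * (p k).1, \sum_k lam k * (p k).2).

Definition segment (a b x : pt R) : Prop :=
  exists s : R, 0 <= s <= 1 /\ x = ((1 - s) * a.1 + s * b.1, (1 - s) * a.2 + s * b.2).

Definition interior (S : pt R -> Prop) (x : pt R) : Prop :=
  exists e : R, 0 < e /\ forall y, dist x y < e -> S y.
Definition closure (S : pt R -> Prop) (x : pt R) : Prop :=
  forall e : R, 0 < e -> exists y, S y /\ dist x y < e.
Definition boundary (S : pt R -> Prop) (x : pt R) : Prop :=
  closure S x /\ ~ interior S x.

Definition hull_edge n (p : 'I_n -> pt R) (i j : 'I_n) : Prop :=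
  forall x, segment (p i) (p j) x -> boundary (conv p) x.

Definition extreme_point (S : pt R -> Prop) (x : pt R) : Prop :=
  S x /\ forall a b (s : R), S a -> S b -> 0 < s < 1 ->
    x = ((1 - s) * a.1 + s * b.1, (1 - s) * a.2 + s * b.2) -> a = b.

Definition wK4 (p : 'I_4 -> pt R) (i j : 'I_4) : R :=
  (\prod_(k : 'I_4 | (k != i) && (k != j)) det3 (p i) (p j) (p k))^-1.

Definition alphaK4 (p : 'I_4 -> pt R) (i : 'I_4) : R :=
  \sum_(j : 'I_4 | j != i) wK4 p i j * dist (p i) (p j).

End Defs.

(* Main.v *)
Require Import Defs.
From mathcomp Require Import all_boot all_order all_algebra.
From mathcomp Require Import reals ring lra.
Set Implicit Arguments. Unset Strict Implicit. Unset Printing Implicit Defensive.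
Import Order.TTheory GRing.Theory Num.Theory.
Local Open Scope ring_scope.

Lemma perm4 {i j k l : 'I_4} : uniq [:: i; j; k; l] ->
  perm_eq (index_enum 'I_4) [:: i; j; k; l].
Proof.
move=> U; apply: uniq_perm => //; first exact: index_enum_uniq.
move=> m; rewrite mem_index_enum.
have Hs : (size (index_enum 'I_4) <= 4)%N.
  have := deprecated_filter_index_enum (@predT 'I_4); rewrite filter_predT => ->.
  by rewrite size_enum_ord.
have [_ ->] := uniq_min_size U (fun x _ => mem_index_enum x) Hs.
by rewrite mem_index_enum.
Qed.

Lemma big4 (T : Type) (idx : T) (op : Monoid.com_law idx) (i j k l : 'I_4)
  (P : pred 'I_4) (F : 'I_4 -> T) :
  uniq [:: i; j; k; l] ->
  \big[op/idx]_(m | P m) F m = \big[op/idx]_(m <- [:: i; j; k; l] | P m) F m.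
Proof. by move=> U; rewrite (perm_big [:: i; j; k; l] (perm4 U)). Qed.

Lemma uniq4E (i j k l : 'I_4) : uniq [:: i; j; k; l] =
  [&& i != j, i != k, i != l, j != k, j != l & k != l].
Proof.
rewrite /= !inE !negb_or !andbT.
by case: (i != j); case: (i != k); case: (i != l); case: (j != k); case: (j != l); case: (k != l).
Qed.

Definition o0 : 'I_4 := @Ordinal 4 0 isT.
Definition o1 : 'I_4 := @Ordinal 4 1 isT.
Definition o2 : 'I_4 := @Ordinal 4 2 isT.
Definition o3 : 'I_4 := @Ordinal 4 3 isT.

Lemma ex_pair (i j : 'I_4) : i != j -> exists k l, uniq [:: i; j; k; l].
Proof.
case: i => -[|[|[|[|//]]]] Hi; case: j => -[|[|[|[|//]]]] Hj // _;
first [ by exists o0, o1 | by exists o0, o2 | by exists o0, o3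
      | by exists o1, o2 | by exists o1, o3 | by exists o2, o3 ].
Qed.

Lemma ex_quad (i : 'I_4) : exists j k l, uniq [:: i; j; k; l].
Proof.
case: i => -[|[|[|[|//]]]] Hi.
- by exists o1, o2, o3.
- by exists o0, o2, o3.
- by exists o0, o1, o3.
- by exists o0, o1, o2.
Qed.

Section Geo.
Variable R : realType.
Implicit Types a b c d x y : pt R.

Lemma det3E a b c :
  det3 a b c = a.1 * (b.2 - c.2) - b.1 * (a.2 - c.2) + c.1 * (a.2 - b.2).
Proof.
rewrite /det3 (expand_det_row _ ord0) !big_ord_recl big_ord0 /cofactor.
rewrite !(expand_det_row _ ord0) !big_ord_recl !big_ord0 /cofactor.
rewrite !det_mx11 !mxE /= /bump /=.
ring.
Qed.

Lemma det3_12 a b c : det3 b a c = - det3 a b c.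
Proof. rewrite !det3E; ring. Qed.
Lemma det3_23 a b c : det3 a c b = - det3 a b c.
Proof. rewrite !det3E; ring. Qed.
Lemma det3_rot a b c : det3 b c a = det3 a b c.
Proof. rewrite !det3E; ring. Qed.

Lemma sep_gt0 a b c : det3 a b c != 0 -> 0 < (a.1 - b.1) ^+ 2 + (a.2 - b.2) ^+ 2.
Proof.
move=> H; rewrite lt_def addr_ge0 ?sqr_ge0 // andbT.
apply/negP => /eqP/eqP; rewrite paddr_eq0 ?sqr_ge0 // !sqrf_eq0 !subr_eq0.
case/andP => /eqP h1 /eqP h2; move: H; rewrite det3E h1 h2.
by apply/negP; rewrite negbK; apply/eqP; ring.
Qed.

Lemma distE a b : dist a b = Num.sqrt ((a.1 - b.1) ^+ 2 + (a.2 - b.2) ^+ 2).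
Proof. by rewrite /dist /enorm /dot /psub /= !expr2. Qed.

Lemma distC a b : dist a b = dist b a.
Proof. by rewrite !distE; congr Num.sqrt; ring. Qed.

Lemma dist_gt0 a b c : det3 a b c != 0 -> 0 < dist a b.
Proof. by move=> H; rewrite distE sqrtr_gt0; apply: sep_gt0 H. Qed.


Lemma abs_le_sqrt (u v : R) : `|u| <= Num.sqrt (u ^+ 2 + v ^+ 2).
Proof.
by rewrite -sqrtr_sqr ler_sqrt ?addr_ge0 ?sqr_ge0 // lerDl sqr_ge0.
Qed.

Lemma lin_bound (u1 u2 al be r : R) : `|u1| <= r -> `|u2| <= r ->
  `|al * u1 + be * u2| <= (`|al| + `|be|) * r.
Proof.
move=> h1 h2; apply: (le_trans (ler_normD _ _)); rewrite !normrM mulrDl.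
by apply: lerD; apply: ler_wpM2l.
Qed.

Lemma nonneg_of (m L d : R) : d != 0 -> `|L| <= `|d| * m -> 0 <= m + L / d.
Proof.
move=> hd hL.
have hd' : 0 < `|d| by rewrite normr_gt0.
have h : `|L / d| <= m by rewrite normrM normfV ler_pdivrMr // mulrC.
have := ler_norm (- (L / d)); rewrite normrN; lra.
Qed.


Lemma tri (W1 W2 W3 x1 x2 y1 y2 z1 z2 : R) : 0 < W1 -> 0 < W2 -> W3 < 0 ->
  W1 * x1 + W2 * y1 + W3 * z1 = 0 -> W1 * x2 + W2 * y2 + W3 * z2 = 0 ->
  x1 * y2 - x2 * y1 != 0 ->
  0 < W1 * Num.sqrt (x1 ^+ 2 + x2 ^+ 2) + W2 * Num.sqrt (y1 ^+ 2 + y2 ^+ 2)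
      + W3 * Num.sqrt (z1 ^+ 2 + z2 ^+ 2).
Proof.
move=> h1 h2 h3 e1 e2 hc.
set nx := Num.sqrt _; set ny := Num.sqrt _; set nz := Num.sqrt _.
have hnx : 0 <= nx := sqrtr_ge0 _.
have hny : 0 <= ny := sqrtr_ge0 _.
have hnz : 0 <= nz := sqrtr_ge0 _.
have qx : nx ^+ 2 = x1 ^+ 2 + x2 ^+ 2 by rewrite sqr_sqrtr // addr_ge0 ?sqr_ge0.
have qy : ny ^+ 2 = y1 ^+ 2 + y2 ^+ 2 by rewrite sqr_sqrtr // addr_ge0 ?sqr_ge0.
have qz : nz ^+ 2 = z1 ^+ 2 + z2 ^+ 2 by rewrite sqr_sqrtr // addr_ge0 ?sqr_ge0.
set d := x1 * y1 + x2 * y2.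
have hc2 : 0 < (x1 * y2 - x2 * y1) ^+ 2 by rewrite exprn_even_gt0.
have hm2 : (nx * ny) ^+ 2 = d ^+ 2 + (x1 * y2 - x2 * y1) ^+ 2.
  by rewrite exprMn qx qy /d; ring.
have hm0 : 0 <= nx * ny by rewrite mulr_ge0.
have hmd : d < nx * ny by nra.
set S := W1 * nx + W2 * ny; set T := - (W3 * nz).
have hS : 0 <= S by rewrite /S addr_ge0 // mulr_ge0 // ltW.
have hT : 0 <= T by rewrite /T oppr_ge0 nmulr_rle0.
have hz1 : W3 * z1 = - (W1 * x1 + W2 * y1) by lra.
have hz2 : W3 * z2 = - (W1 * x2 + W2 * y2) by lra.
have hT2 : T ^+ 2 = (W1 * x1 + W2 * y1) ^+ 2 + (W1 * x2 + W2 * y2) ^+ 2.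
  rewrite /T sqrrN exprMn qz mulrDr -!exprMn hz1 hz2; ring.
have hW : 0 < W1 * W2 by rewrite mulr_gt0.
have hST : T ^+ 2 < S ^+ 2.
  rewrite hT2 /S.
  have -> : (W1 * nx + W2 * ny) ^+ 2 = W1 ^+ 2 * nx ^+ 2 + W2 ^+ 2 * ny ^+ 2
          + 2 * (W1 * W2) * (nx * ny) by ring.
  rewrite qx qy.
  have : 2 * (W1 * W2) * d < 2 * (W1 * W2) * (nx * ny).
    by rewrite ltr_pM2l // mulr_gt0.
  rewrite /d; move=> h.
  have -> : (W1 * x1 + W2 * y1) ^+ 2 + (W1 * x2 + W2 * y2) ^+ 2 =
    W1 ^+ 2 * (x1 ^+ 2 + x2 ^+ 2) + W2 ^+ 2 * (y1 ^+ 2 + y2 ^+ 2)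
      + 2 * (W1 * W2) * (x1 * y1 + x2 * y2) by ring.
  lra.
have : T < S by nra.
rewrite /S /T; lra.
Qed.


Lemma sign3 (x y z : R) : x * y * z < 0 ->
  [\/ [/\ x < 0, y < 0 & z < 0], [/\ x < 0, 0 < y & 0 < z],
      [/\ 0 < x, y < 0 & 0 < z] | [/\ 0 < x, 0 < y & z < 0]].
Proof.
move=> h.
case: (ltgtP x 0) => hx; case: (ltgtP y 0) => hy; case: (ltgtP z 0) => hz;
  first [ by apply: Or41; split | by apply: Or42; split | by apply: Or43; split
        | by apply: Or44; split
        | by move: h; rewrite ?hx ?hy ?hz ?mulr0 ?mul0r ltxx
        | exfalso; case: (ltgtP (x * y) 0) => hxy;
          [nra | nra | by move: h; rewrite hxy mul0r ltxx] ].
Qed.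

End Geo.

Section P.
Variable R : realType.
Variable p : 'I_4 -> pt R.
Local Notation D a b c := (det3 (p a) (p b) (p c)).

Lemma sum4 (T : Type) (idx : T) (op : Monoid.com_law idx) (i j k l : 'I_4) (F : 'I_4 -> T) :
  uniq [:: i; j; k; l] ->
  \big[op/idx]_m F m = op (F i) (op (F j) (op (F k) (F l))).
Proof.
move=> U; rewrite (@big4 _ idx op i j k l xpredT F U) !big_cons big_nil /=.
by rewrite Monoid.mulm1.
Qed.

Lemma wK4E (i j k l : 'I_4) : uniq [:: i; j; k; l] ->
  wK4 p i j = (D i j k * D i j l)^-1.
Proof.
move=> U; have := U; rewrite uniq4E => /and5P[hij hik hil hjk /andP[hjl hkl]].
rewrite /wK4 (big4 _ _ _ U) !big_cons big_nil !eqxx /=.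
rewrite (eq_sym j i) (eq_sym k i) (eq_sym k j) (eq_sym l i) (eq_sym l j) hij hik hjk hil hjl /=.
by rewrite mulr1.
Qed.

Lemma alphaE (i j k l : 'I_4) : uniq [:: i; j; k; l] ->
  alphaK4 p i = wK4 p i j * dist (p i) (p j) + wK4 p i k * dist (p i) (p k)
                + wK4 p i l * dist (p i) (p l).
Proof.
move=> U; have := U; rewrite uniq4E => /and5P[hij hik hil hjk /andP[hjl hkl]].
rewrite /alphaK4 (big4 _ _ _ U) !big_cons big_nil !eqxx /=.
rewrite (eq_sym j i) (eq_sym k i) (eq_sym l i) hij hik hil /=.
by rewrite addr0 addrA.
Qed.

Hypothesis GP : general_position p.

Lemma GPne (i j k l : 'I_4) : uniq [:: i; j; k; l] -> D i j k != 0.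
Proof.
rewrite uniq4E => /and5P[hij hik hil hjk /andP[hjl hkl]].
by apply: GP.
Qed.


Definition comb (a b c d : R) (i j k l : 'I_4) : pt R :=
  (a * (p i).1 + b * (p j).1 + c * (p k).1 + d * (p l).1,
   a * (p i).2 + b * (p j).2 + c * (p k).2 + d * (p l).2).

Lemma convE (i j k l : 'I_4) x : uniq [:: i; j; k; l] ->
  conv p x <-> exists a b c d : R,
    [/\ 0 <= a, 0 <= b, 0 <= c & 0 <= d] /\ a + b + c + d = 1 /\ x = comb a b c d i j k l.
Proof.
move=> U; have := U; rewrite uniq4E => /and5P[hij hik hil hjk /andP[hjl hkl]].
split.
- case=> lam [H0 [H1 ->]]; exists (lam i), (lam j), (lam k), (lam l).
  split; first by split.
  move: H1; rewrite (@sum4 _ _ _ i j k l) //= !addrA => ->; split => //.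
  by rewrite /comb !(@sum4 _ _ _ i j k l) //= !addrA.
- case=> a [b [c [d [[ha hb hc hd] [hs ->]]]]].
  pose lam m := if m == i then a else if m == j then b else if m == k then c else d.
  exists lam; split.
    by move=> m; rewrite /lam; case: ifP => // _; case: ifP => // _; case: ifP.
  have Ei : lam i = a by rewrite /lam eqxx.
  have Ej : lam j = b by rewrite /lam eq_sym (negbTE hij) eqxx.
  have Ek : lam k = c by rewrite /lam eq_sym (negbTE hik) eq_sym (negbTE hjk) eqxx.
  have El : lam l = d.
    by rewrite /lam eq_sym (negbTE hil) eq_sym (negbTE hjl) eq_sym (negbTE hkl).
  rewrite !(@sum4 _ _ _ i j k l) //= Ei Ej Ek El !addrA; split => //.
Qed.


Lemma sqrt_lt (q e : R) : 0 < e -> q < e ^+ 2 -> Num.sqrt q < e.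
Proof.
move=> he hq; have he2 : 0 < e ^+ 2 by rewrite exprn_gt0.
by rewrite -[e in _ < e]gtr0_norm // -sqrtr_sqr ltr_sqrt.
Qed.

Lemma G1 (i j k l : 'I_4) : uniq [:: i; j; k; l] -> 0 < D i j k * D i j l ->
  forall x, segment (p i) (p j) x -> boundary (conv p) x.
Proof.
move=> U Hpos _ [s [/andP[hs0 hs1] ->]].
set x := (_, _).
have Hx : conv p x.
  apply/(convE _ U); exists (1 - s), s, 0, 0; split; first by split; lra.
  split; first lra.
  by rewrite /comb /x; congr pair; ring.
split.
  move=> e he; exists x; split => //.
  by rewrite distE !subrr expr0n /= addr0 sqrtr0.
case=> e [he Hb].
have Dk0 : D i j k != 0 by exact: (GPne U).
set Dk := D i j k in Hpos Dk0 *; set Dl := D i j l in Hpos.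
set A := (p i).2 - (p j).2; set B := (p j).1 - (p i).1.
have hAB : 0 < A ^+ 2 + B ^+ 2.
  have := sep_gt0 Dk0; congr (0 < _); rewrite /A /B; ring.
set Q := Dk ^+ 2 * (A ^+ 2 + B ^+ 2).
have hQ : 0 < Q by rewrite /Q mulr_gt0 // exprn_even_gt0.
set u := (Q + 1)^-1.
have hu : 0 < u by rewrite /u invr_gt0; lra.
have huQ : u * Q = 1 - u.
  have hQ1 : Q + 1 != 0 by apply: lt0r_neq0; lra.
  by rewrite /u; field.
set t := e * u.
have ht : 0 < t by rewrite mulr_gt0.
pose y : pt R := (x.1 - t * Dk * A, x.2 - t * Dk * B).
have : conv p y.
  apply: Hb; rewrite distE; apply: sqrt_lt => //.
  have -> : (x.1 - y.1) ^+ 2 + (x.2 - y.2) ^+ 2 = e ^+ 2 * (u * (u * Q)).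
    by rewrite /y /t /Q /=; ring.
  rewrite huQ; have : u < 1.
    rewrite /u invf_lt1; lra.
  move=> hu1; rewrite -[X in _ < X]mulr1 ltr_pM2l ?exprn_gt0 //.
  nra.
rewrite (convE _ U) => -[al [be [ga [de [[ha hb hc hd] [hs' Ey]]]]]].
have E1 : det3 (p i) (p j) y = ga * Dk + de * Dl.
  rewrite Ey /comb /Dk /Dl !det3E /=.
  have -> : al = 1 - be - ga - de by lra.
  ring.
have E2 : det3 (p i) (p j) y = - (t * Dk) * (A ^+ 2 + B ^+ 2).
  by rewrite /y /x /A /B !det3E /=; ring.
have : 0 <= Dk * det3 (p i) (p j) y.
  rewrite E1 mulrDr; apply: addr_ge0.
    by rewrite mulrCA mulr_ge0 // -expr2 sqr_ge0.
  by rewrite mulrCA mulr_ge0 // ltW.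
have -> : Dk * det3 (p i) (p j) y = - (t * Q) by rewrite E2 /Q; ring.
have := mulr_gt0 ht hQ; lra.
Qed.


Lemma pos_interior (i j k l : 'I_4) (ma mb mc md : R) : uniq [:: i; j; k; l] ->
  0 < ma -> 0 < mb -> 0 < mc -> 0 < md -> ma + mb + mc + md = 1 ->
  interior (conv p) (comb ma mb mc md i j k l).
Proof.
move=> U ha hb hc hd hs.
have D0 : D i j k != 0 by exact: (GPne U).
set x := comb _ _ _ _ _ _ _ _.
set Dv := D i j k.
set a1 := (p i).1; set a2 := (p i).2; set b1 := (p j).1; set b2 := (p j).2;
set c1 := (p k).1; set c2 := (p k).2.
set K := `|c2 - b2| + `|b1 - c1| + `|a2 - c2| + `|c1 - a1| + `|b2 - a2| + `|a1 - b1| + 1.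
have n1 := normr_ge0 (c2 - b2); have n2 := normr_ge0 (b1 - c1).
have n3 := normr_ge0 (a2 - c2); have n4 := normr_ge0 (c1 - a1).
have n5 := normr_ge0 (b2 - a2); have n6 := normr_ge0 (a1 - b1).
have hK : 0 < K by rewrite /K; lra.
set m0 := Num.min ma (Num.min mb mc).
have hm0 : 0 < m0 by rewrite /m0 !lt_min ha hb hc.
have hm0a : m0 <= ma by rewrite /m0 ge_min lexx.
have hm0b : m0 <= mb by rewrite /m0 !ge_min lexx orbT.
have hm0c : m0 <= mc by rewrite /m0 !ge_min lexx !orbT.
have hD : 0 < `|Dv| by rewrite normr_gt0.
exists (`|Dv| * m0 / K); split; first by rewrite divr_gt0 ?mulr_gt0.
move=> y; rewrite distE => hr.
set r := Num.sqrt _ in hr.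
have hrK : r * K < `|Dv| * m0 by rewrite -ltr_pdivlMr.
have hr0 : 0 <= r by apply: sqrtr_ge0.
have hu1 : `|x.1 - y.1| <= r by exact: (abs_le_sqrt (x.1 - y.1) (x.2 - y.2)).
have hu2 : `|x.2 - y.2| <= r by rewrite /r (addrC ((x.1 - y.1) ^+ 2)); exact: abs_le_sqrt.
set La := det3 y (p j) (p k) - det3 x (p j) (p k).
set Lb := det3 (p i) y (p k) - det3 (p i) x (p k).
set Lc := det3 (p i) (p j) y - det3 (p i) (p j) x.
have hLa : `|La| <= `|Dv| * ma.
  have -> : La = (c2 - b2) * (x.1 - y.1) + (b1 - c1) * (x.2 - y.2).
    by rewrite /La !det3E; ring.
  apply: (le_trans (lin_bound _ _ hu1 hu2)).
  have : (`|c2 - b2| + `|b1 - c1|) * r <= K * r by apply: ler_wpM2r => //; rewrite /K; lra.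
  have : `|Dv| * m0 <= `|Dv| * ma by apply: ler_wpM2l => //; apply: ltW.
  rewrite (mulrC r) in hrK; lra.
have hLb : `|Lb| <= `|Dv| * mb.
  have -> : Lb = (a2 - c2) * (x.1 - y.1) + (c1 - a1) * (x.2 - y.2).
    by rewrite /Lb !det3E; ring.
  apply: (le_trans (lin_bound _ _ hu1 hu2)).
  have : (`|a2 - c2| + `|c1 - a1|) * r <= K * r by apply: ler_wpM2r => //; rewrite /K; lra.
  have : `|Dv| * m0 <= `|Dv| * mb by apply: ler_wpM2l => //; apply: ltW.
  rewrite (mulrC r) in hrK; lra.
have hLc : `|Lc| <= `|Dv| * mc.
  have -> : Lc = (b2 - a2) * (x.1 - y.1) + (a1 - b1) * (x.2 - y.2).
    by rewrite /Lc !det3E; ring.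
  apply: (le_trans (lin_bound _ _ hu1 hu2)).
  have : (`|b2 - a2| + `|a1 - b1|) * r <= K * r by apply: ler_wpM2r => //; rewrite /K; lra.
  have : `|Dv| * m0 <= `|Dv| * mc by apply: ler_wpM2l => //; apply: ltW.
  rewrite (mulrC r) in hrK; lra.
apply/(convE _ U); exists (ma + La / Dv), (mb + Lb / Dv), (mc + Lc / Dv), md.
split; first by split; [apply: nonneg_of | apply: nonneg_of | apply: nonneg_of | apply: ltW].
have hmd : md = 1 - ma - mb - mc by lra.
move: D0; rewrite /Dv /La /Lb /Lc /x /comb hmd !det3E /= -/a1 -/a2 -/b1 -/b2 -/c1 -/c2 => D0.
split; first by field.
case: y {hr hu1 hu2 La Lb Lc hLa hLb hLc r hrK hr0} => y1 y2 /=.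
by congr pair; field.
Qed.



Lemma uniq_perm4 (i j k l : 'I_4) : uniq [:: i; j; k; l] ->
  [/\ uniq [:: i; j; l; k], uniq [:: i; k; j; l], uniq [:: i; l; j; k],
      uniq [:: j; k; l; i] & uniq [:: j; i; k; l]].
Proof.
rewrite !uniq4E => /and5P[hij hik hil hjk /andP[hjl hkl]].
have hji : j != i by rewrite eq_sym.
have hki : k != i by rewrite eq_sym.
have hli : l != i by rewrite eq_sym.
have hkj : k != j by rewrite eq_sym.
have hlj : l != j by rewrite eq_sym.
have hlk : l != k by rewrite eq_sym.
by rewrite ?hij ?hik ?hil ?hjk ?hjl ?hkl ?hji ?hki ?hli ?hkj ?hlj ?hlk.
Qed.

Lemma G2 (i j k l : 'I_4) : uniq [:: i; j; k; l] -> D i j k * D i j l < 0 ->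
  ~ hull_edge p i j.
Proof.
move=> U Hneg Hh.
have [U1 _ _ _ _] := uniq_perm4 U.
have Dl0 : D i j l != 0 by exact: (GPne U1).
set ci := D j k l; set cj := - D i k l; set ck := D i j l; set cl := - D i j k.
have hkl : 0 < ck * cl by rewrite /ck /cl mulrN mulrC; lra.
set P := ck * ci; set Q := ck * cj.
have nP := normr_ge0 P; have nQ := normr_ge0 Q.
set t := (4 * (`|P| + `|Q| + 1))^-1.
have ht : 0 < t by rewrite /t invr_gt0; lra.
have ht4 : t * (`|P| + `|Q| + 1) = 1 / 4.
  have h0 : `|P| + `|Q| + 1 != 0 by apply: lt0r_neq0; lra.
  by rewrite /t; field.
have htP : t * `|P| <= 1 / 4.
  rewrite -ht4 !mulrDr; have := mulr_ge0 (ltW ht) nQ; lra.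
have htQ : t * `|Q| <= 1 / 4.
  rewrite -ht4 !mulrDr; have := mulr_ge0 (ltW ht) nP; lra.
have hP : - (t * `|P|) <= t * P.
  rewrite -mulrN ler_pM2l //; have := ler_norm (- P); rewrite normrN; lra.
have hQ : - (t * `|Q|) <= t * Q.
  by rewrite -mulrN ler_pM2l //; have := ler_norm (- Q); rewrite normrN; lra.
have hck : 0 < ck ^+ 2 by rewrite exprn_even_gt0.
have Hint : interior (conv p) (comb (1/2 + t * P) (1/2 + t * Q) (t * ck ^+ 2) (t * (ck * cl)) i j k l).
  apply: (pos_interior U); [lra | lra | exact: mulr_gt0 ht hck | exact: mulr_gt0 ht hkl | ].
  by rewrite /P /Q /ci /cj /ck /cl !det3E; field.
have Hseg : segment (p i) (p j) (comb (1/2 + t * P) (1/2 + t * Q) (t * ck ^+ 2) (t * (ck * cl)) i j k l).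
  exists (1/2); split; first lra.
  by rewrite /comb /P /Q /ci /cj /ck /cl !det3E; congr pair; field.
by case: (Hh _ Hseg).
Qed.

Lemma G3 (i j k l : 'I_4) : uniq [:: i; j; k; l] ->
  0 < (- D i k l) * D i j l -> 0 < (- D i k l) * (- D i j k) -> 0 < D i j l * (- D i j k) ->
  ~ extreme_point (conv p) (p i).
Proof.
move=> U.
have [_ _ _ U4 _] := uniq_perm4 U.
have Di0 : D j k l != 0 by exact: (GPne U4).
have SE : - D i k l + D i j l + - D i j k = - D j k l by rewrite !det3E; ring.
move: Di0; rewrite -oppr_eq0 -SE.
set cj := - D i k l; set ck := D i j l; set cl := - D i j k.
move=> S0 hjk hjl hkl [_ Hext].
set S := cj + ck + cl in S0.
have hS2 : 0 < S ^+ 2 by rewrite exprn_even_gt0.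
have hjS : 0 < cj * S by rewrite /S !mulrDr -expr2; have := sqr_ge0 cj; lra.
have hkS : 0 < (ck + cl) * S by rewrite /S !mulrDr !mulrDl -!expr2; have := sqr_ge0 ck; have := sqr_ge0 cl; nra.
have hkk : 0 < ck * (ck + cl) by rewrite mulrDr -expr2; have := sqr_ge0 ck; lra.
have hll : 0 < cl * (ck + cl) by rewrite mulrDr -expr2; have := sqr_ge0 cl; nra.
have hkl0 : ck + cl != 0 by apply/negP => /eqP h; move: hkk; rewrite h mulr0 ltxx.
have hT2 : 0 < (ck + cl) ^+ 2 by rewrite exprn_even_gt0.
pose B : pt R := ((ck * (p k).1 + cl * (p l).1) / (ck + cl),
                  (ck * (p k).2 + cl * (p l).2) / (ck + cl)).
have HA : conv p (p j).
  apply/(convE _ U); exists 0, 1, 0, 0; split; first by split; lra.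
  split; first lra.
  by apply: injective_projections; rewrite /comb /=; ring.
have HB : conv p B.
  apply/(convE _ U); exists 0, 0, (ck / (ck + cl)), (cl / (ck + cl)).
  split.
    split; [lra | lra | | ].
    + have -> : ck / (ck + cl) = ck * (ck + cl) / (ck + cl) ^+ 2 by field.
      by rewrite divr_ge0 ?ltW.
    + have -> : cl / (ck + cl) = cl * (ck + cl) / (ck + cl) ^+ 2 by field.
      by rewrite divr_ge0 ?ltW.
  split; first by field.
  by apply: injective_projections; rewrite /comb /B /=; field.
have Hs : 0 < (ck + cl) / S < 1.
  have -> : (ck + cl) / S = (ck + cl) * S / S ^+ 2 by field.
  have -> : 1 = (cj * S + (ck + cl) * S) / S ^+ 2 by rewrite /S; field.
  by rewrite divr_gt0 //= ltr_pM2r ?invr_gt0 //; lra.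
have E : p j = B.
  apply: (Hext _ _ _ HA HB Hs).
  move: S0 hkl0; rewrite /S /B /cj /ck /cl !det3E => S0 hkl0.
  by apply: injective_projections; rewrite /= ?det3E; field; rewrite S0 hkl0.
have Dz : det3 B (p k) (p l) = 0.
  move: hkl0; rewrite /B /ck /cl !det3E /= => hkl0.
  by field.
have : D j k l != 0 by exact: (GPne U4).
by rewrite E Dz eqxx.
Qed.

Lemma alpha_sign (i j k l : 'I_4) : uniq [:: i; j; k; l] ->
  (extreme_point (conv p) (p i) -> 0 < alphaK4 p i) /\
  (interior (conv p) (p i) -> alphaK4 p i < 0).
Proof.
move=> U; have [U1 U2 U3 U4 U5] := uniq_perm4 U.
have := U; rewrite uniq4E => /and5P[hij hik hil hjk /andP[hjl hkl]].
have Dijk : D i j k != 0 by exact: GP.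
have Dijl : D i j l != 0 by exact: GP.
have Dikl : D i k l != 0 by exact: GP.
rewrite (alphaE U) (wK4E U) (wK4E U2) (wK4E U3).
set W1 := (D i j k * D i j l)^-1; set W2 := (D i k j * D i k l)^-1;
set W3 := (D i l j * D i l k)^-1.
have EW2 : D i k j * D i k l = - (D i j k * D i k l) by rewrite (det3_23 (p i) (p j) (p k)) mulNr.
have EW3 : D i l j * D i l k = D i j l * D i k l by rewrite (det3_23 (p i) (p j) (p l)) (det3_23 (p i) (p k) (p l)) mulrNN.
have hprod : W1 * W2 * W3 < 0.
  have -> : W1 * W2 * W3 = - ((D i j k * D i j l * D i k l) ^+ 2)^-1.
    rewrite /W1 /W2 /W3 EW2 EW3.
    move: Dijk Dijl Dikl; set X := D i j k; set Y := D i j l; set Z := D i k l.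
    move=> h1 h2 h3; field; by rewrite ?h1 ?h2 ?h3.
  have : 0 < ((D i j k * D i j l * D i k l) ^+ 2)^-1.
    by rewrite invr_gt0 exprn_even_gt0 // !mulf_neq0.
  lra.
set a1 := (p i).1; set a2 := (p i).2; set b1 := (p j).1; set b2 := (p j).2;
set c1 := (p k).1; set c2 := (p k).2; set d1 := (p l).1; set d2 := (p l).2.
have eW : forall u v w : R,
    W1 * u + W2 * v + W3 * w = (D i k l * u - D i j l * v + D i j k * w) / (D i j k * D i j l * D i k l).
  move=> u v w; rewrite /W1 /W2 /W3 EW2 EW3.
  move: Dijk Dijl Dikl; set X := D i j k; set Y := D i j l; set Z := D i k l.
  move=> h1 h2 h3; field; by rewrite ?h1 ?h2 ?h3.
have eq1 : W1 * (a1 - b1) + W2 * (a1 - c1) + W3 * (a1 - d1) = 0.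
  rewrite eW; apply/eqP; rewrite mulf_eq0; apply/orP; left; apply/eqP.
  by rewrite !det3E; ring.
have eq2 : W1 * (a2 - b2) + W2 * (a2 - c2) + W3 * (a2 - d2) = 0.
  rewrite eW; apply/eqP; rewrite mulf_eq0; apply/orP; left; apply/eqP.
  by rewrite !det3E; ring.
have cr1 : (a1 - b1) * (a2 - c2) - (a2 - b2) * (a1 - c1) != 0.
  have -> : (a1 - b1) * (a2 - c2) - (a2 - b2) * (a1 - c1) = D i j k by rewrite det3E; ring.
  by [].
have cr2 : (a1 - b1) * (a2 - d2) - (a2 - b2) * (a1 - d1) != 0.
  have -> : (a1 - b1) * (a2 - d2) - (a2 - b2) * (a1 - d1) = D i j l by rewrite det3E; ring.
  by [].
have cr3 : (a1 - c1) * (a2 - d2) - (a2 - c2) * (a1 - d1) != 0.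
  have -> : (a1 - c1) * (a2 - d2) - (a2 - c2) * (a1 - d1) = D i k l by rewrite det3E; ring.
  by [].
have dj := dist_gt0 Dijk.
have dk : 0 < dist (p i) (p k) by apply: (dist_gt0 (c := p l)); exact: GP.
have dl : 0 < dist (p i) (p l).
  apply: (dist_gt0 (c := p k)); apply: GP => //; by rewrite eq_sym.
have NI : forall j' k' l', uniq [:: i; j'; k'; l'] -> 0 < D i j' k' * D i j' l' ->
    ~ interior (conv p) (p i).
  move=> j' k' l' U' H Hint.
  have Hs : segment (p i) (p j') (p i).
    exists 0; split; first lra.
    by apply: injective_projections => /=; ring.
  by have [_ ] := G1 U' H Hs.
have E1 : 0 < W1 -> 0 < D i j k * D i j l by rewrite /W1 invr_gt0.
have E2 : 0 < W2 -> 0 < D i k j * D i k l by rewrite /W2 invr_gt0.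
have E1' : W1 < 0 -> D i j k * D i j l < 0 by rewrite /W1 invr_lt0.
have E2' : W2 < 0 -> - (D i j k * D i k l) < 0 by rewrite /W2 EW2 invr_lt0.
have E3' : W3 < 0 -> D i j l * D i k l < 0 by rewrite /W3 EW3 invr_lt0.
move: dj dk dl; rewrite !distE -/a1 -/a2 -/b1 -/b2 -/c1 -/c2 -/d1 -/d2 => dj dk dl.
case: (sign3 hprod) => -[h1 h2 h3].
- split.
    move=> Hext; exfalso; apply: (G3 U) Hext.
    + by have := E3' h3; nra.
    + by have := E2' h2; nra.
    + by have := E1' h1; nra.
  move=> _.
  have H : forall w s : R, w < 0 -> 0 < s -> w * s < 0.
    by move=> w s hw hs; rewrite pmulr_llt0.
  have := H _ _ h1 dj; have := H _ _ h2 dk; have := H _ _ h3 dl; lra.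
- split; last by move=> Hint; case: (NI _ _ _ U2 (E2 h2) Hint).
  move=> _.
  have e1 : W2 * (a1 - c1) + W3 * (a1 - d1) + W1 * (a1 - b1) = 0 by rewrite -[RHS]eq1; ring.
  have e2 : W2 * (a2 - c2) + W3 * (a2 - d2) + W1 * (a2 - b2) = 0 by rewrite -[RHS]eq2; ring.
  have := tri h2 h3 h1 e1 e2 cr3; lra.
- split; last by move=> Hint; case: (NI _ _ _ U (E1 h1) Hint).
  move=> _.
  have e1 : W1 * (a1 - b1) + W3 * (a1 - d1) + W2 * (a1 - c1) = 0 by rewrite -[RHS]eq1; ring.
  have e2 : W1 * (a2 - b2) + W3 * (a2 - d2) + W2 * (a2 - c2) = 0 by rewrite -[RHS]eq2; ring.
  have := tri h1 h3 h2 e1 e2 cr2; lra.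
- split; last by move=> Hint; case: (NI _ _ _ U (E1 h1) Hint).
  move=> _.
  have := tri h1 h2 h3 eq1 eq2 cr1; lra.
Qed.

Lemma wK4C (i j : 'I_4) : i != j -> wK4 p i j = wK4 p j i.
Proof.
move=> hij; have [k [l U]] := ex_pair hij.
have [_ _ _ _ U5] := uniq_perm4 U.
by rewrite (wK4E U) (wK4E U5) !(det3_12 (p j)) mulrNN.
Qed.

Lemma equil (i j k l : 'I_4) : uniq [:: i; j; k; l] ->
  wK4 p i j * ((p i).1 - (p j).1) + wK4 p i k * ((p i).1 - (p k).1)
    + wK4 p i l * ((p i).1 - (p l).1) = 0 /\
  wK4 p i j * ((p i).2 - (p j).2) + wK4 p i k * ((p i).2 - (p k).2)
    + wK4 p i l * ((p i).2 - (p l).2) = 0.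
Proof.
move=> U; have [U1 U2 U3 U4 U5] := uniq_perm4 U.
have := U; rewrite uniq4E => /and5P[hij hik hil hjk /andP[hjl hkl]].
have Dijk : D i j k != 0 by exact: GP.
have Dijl : D i j l != 0 by exact: GP.
have Dikl : D i k l != 0 by exact: GP.
rewrite (wK4E U) (wK4E U2) (wK4E U3).
have EW2 : D i k j * D i k l = - (D i j k * D i k l) by rewrite (det3_23 (p i) (p j) (p k)) mulNr.
have EW3 : D i l j * D i l k = D i j l * D i k l by rewrite (det3_23 (p i) (p j) (p l)) (det3_23 (p i) (p k) (p l)) mulrNN.
rewrite EW2 EW3.
have eW : forall u v w : R,
    (D i j k * D i j l)^-1 * u + (- (D i j k * D i k l))^-1 * v + (D i j l * D i k l)^-1 * w
    = (D i k l * u - D i j l * v + D i j k * w) / (D i j k * D i j l * D i k l).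
  move=> u v w.
  move: Dijk Dijl Dikl; set X := D i j k; set Y := D i j l; set Z := D i k l.
  move=> h1 h2 h3; field; by rewrite ?h1 ?h2 ?h3.
rewrite !eW; split; apply/eqP; rewrite mulf_eq0; apply/orP; left; apply/eqP;
  by rewrite !det3E; ring.
Qed.

Lemma stress_ok : is_stress p (complete_edges 4) [set: 'I_4] (wK4 p) (alphaK4 p).
Proof.
move=> v t.
rewrite (eq_bigl (fun e : 'I_4 * 'I_4 => true && (e.1 < e.2)%N)); last by move=> e; rewrite inE.
rewrite -(pair_big_dep xpredT (fun i j : 'I_4 => (i < j)%N) (fun i j =>
   wK4 p i j * (dot (psub (p i) (p j)) (psub (v i) (v j)) - enorm (psub (p i) (p j)) * (t i + t j)))).
have U : uniq [:: o0; o1; o2; o3] by [].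
rewrite !(@sum4 _ _ _ o0 o1 o2 o3) //=.
rewrite !(big4 _ _ _ U) !big_cons !big_nil /=.
rewrite ?inE /=.
have U1 : uniq [:: o1; o0; o2; o3] by [].
have U2 : uniq [:: o2; o0; o1; o3] by [].
have U3 : uniq [:: o3; o0; o1; o2] by [].
have [E0x E0y] := equil U.
have [E1x E1y] := equil U1.
have [E2x E2y] := equil U2.
have [E3x E3y] := equil U3.
rewrite (alphaE U) (alphaE U1) (alphaE U2) (alphaE U3).
have C10 : wK4 p o1 o0 = wK4 p o0 o1 by rewrite wK4C.
have C20 : wK4 p o2 o0 = wK4 p o0 o2 by rewrite wK4C.
have C30 : wK4 p o3 o0 = wK4 p o0 o3 by rewrite wK4C.
have C21 : wK4 p o2 o1 = wK4 p o1 o2 by rewrite wK4C.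
have C31 : wK4 p o3 o1 = wK4 p o1 o3 by rewrite wK4C.
have C32 : wK4 p o3 o2 = wK4 p o2 o3 by rewrite wK4C.
rewrite C10 C20 C30 C21 C31 C32 in E1x E1y E2x E2y E3x E3y *.
rewrite (distC (p o1) (p o0)) (distC (p o2) (p o0)) (distC (p o3) (p o0))
        (distC (p o2) (p o1)) (distC (p o3) (p o1)) (distC (p o3) (p o2)).
rewrite /dist.
let X0 := lazymatch type of E0x with ?X = _ => X end in
let Y0 := lazymatch type of E0y with ?X = _ => X end in
let X1 := lazymatch type of E1x with ?X = _ => X end in
let Y1 := lazymatch type of E1y with ?X = _ => X end in
let X2 := lazymatch type of E2x with ?X = _ => X end in
let Y2 := lazymatch type of E2y with ?X = _ => X end in
let X3 := lazymatch type of E3x with ?X = _ => X end in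
let Y3 := lazymatch type of E3y with ?X = _ => X end in
transitivity ((v o0).1 * X0 + (v o0).2 * Y0 + (v o1).1 * X1 + (v o1).2 * Y1
  + (v o2).1 * X2 + (v o2).2 * Y2 + (v o3).1 * X3 + (v o3).2 * Y3).
  by rewrite /dot /psub /=; ring.
by rewrite E0x E0y E1x E1y E2x E2y E3x E3y !mulr0 !addr0.
Qed.

End P.

Theorem mainTheorem16 (R : realType) (p : 'I_4 -> pt R) :
  general_position p ->
  is_stress p (complete_edges 4) [set: 'I_4] (wK4 p) (alphaK4 p) /\
  (forall i j : 'I_4, i != j ->
     (hull_edge p i j -> 0 < wK4 p i j) /\
     (~ hull_edge p i j -> wK4 p i j < 0)) /\
  (forall i : 'I_4,
     (extreme_point (conv p) (p i) -> 0 < alphaK4 p i) /\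
     (interior (conv p) (p i) -> alphaK4 p i < 0)).
Proof.
move=> GP; split; first exact: stress_ok GP.
split.
- move=> i j hij; have [k [l U]] := ex_pair hij.
  have [U1 _ _ _ _] := uniq_perm4 U.
  have h0 : det3 (p i) (p j) (p k) * det3 (p i) (p j) (p l) != 0.
    by apply: mulf_neq0; [exact: (GPne GP U) | exact: (GPne GP U1)].
  rewrite (wK4E p U); split.
  + move=> Hh; rewrite invr_gt0.
    case: (ltgtP (det3 (p i) (p j) (p k) * det3 (p i) (p j) (p l)) 0) => h //.
      by case: (G2 GP U h Hh).
    by move: h0; rewrite h eqxx.
  + move=> Hn; rewrite invr_lt0.
    case: (ltgtP (det3 (p i) (p j) (p k) * det3 (p i) (p j) (p l)) 0) => h //.
      by case: Hn; apply: (G1 GP U h).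
    by move: h0; rewrite h eqxx.
- move=> i; have [j [k [l U]]] := ex_quad i.
  exact: (alpha_sign GP U).
Qed.
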